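(* Let $K\ge1$, let $q_1,\dots,q_K$ be distinct primes satisfying $\tfrac12<q_j/q_{j'}<2$ for all $j,j'$, and let $\phi:\mathbb Z\to\mathbb R$ have finite support. Then for every $\tilde\lambda>0$, $$\#\{n\in\mathbb Z:\ \mathcal B^*(\phi,n)>\tilde\lambda\}\le\frac{4}{\tilde\lambda}\,\|\phi\|_{\ell^1}.$$
   Context: Let $p=q_1q_2\cdots q_K$ and $\tilde q_j=p/q_j$. For $n\in\mathbb Z$ and integer $N\ge1$ put $t_0(n,N)=\lfloor n/p\rfloor+1$, $t_1(n,N)=\lfloor (n+N)/p\rfloor+1$, $N'=t_1(n,N)-t_0(n,N)+1$, $I(n,N)=[(t_0(n,N)-1)p-n,\ t_1(n,N)p-n)\cap\mathbb Z$, and $\nu(n,N,j)=N'\tilde q_j$. Define $$\mathcal B(\phi,n,N,j)=\frac1{\nu(n,N,j)}\sum_{l\in\mathbb Z:\ lq_j\in I(n,N)}\phi(n+lq_j),\qquad \mathcal B(\phi,n,N)=\frac{\sum_{j=1}^K\nu(n,N,j)\,\mathcal B(\phi,n,N,j)}{\sum_{j=1}^K\nu(n,N,j)},$$ and $\mathcal B^*(\phi,n)=\sup_{N\ge1}|\mathcal B(\phi,n,N)|$. $\|\phi\|_{\ell^1}=\sum_{n\in\mathbb Z}|\phi(n)|$. *)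

(* Defs.v *)
From Stdlib Require Import Reals ZArith List Znumtheory.
From Coquelicot Require Import Coquelicot.
Import ListNotations.
Open Scope R_scope.

(* Primes q_1..q_K are represented 0-based: q j for j < K. *)

Definition Zrange (a b : Z) : list Z :=
  map (fun k => (a + Z.of_nat k)%Z) (seq 0 (Z.to_nat (b - a))).

Definition Rsum_list (l : list R) : R := fold_right Rplus 0 l.

Definition pprod (K : nat) (q : nat -> Z) : Z :=
  fold_right Z.mul 1%Z (map q (seq 0 K)).

Definition qtilde (K : nat) (q : nat -> Z) (j : nat) : Z := (pprod K q / q j)%Z.

Definition t0 (K : nat) (q : nat -> Z) (n : Z) (N : nat) : Z :=
  (n / pprod K q + 1)%Z.
Definition t1 (K : nat) (q : nat -> Z) (n : Z) (N : nat) : Z :=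
  ((n + Z.of_nat N) / pprod K q + 1)%Z.
Definition Nprime (K : nat) (q : nat -> Z) (n : Z) (N : nat) : Z :=
  (t1 K q n N - t0 K q n N + 1)%Z.

Definition Ilo (K : nat) (q : nat -> Z) (n : Z) (N : nat) : Z :=
  ((t0 K q n N - 1) * pprod K q - n)%Z.
Definition Ihi (K : nat) (q : nat -> Z) (n : Z) (N : nat) : Z :=
  (t1 K q n N * pprod K q - n)%Z.

Definition nu (K : nat) (q : nat -> Z) (n : Z) (N : nat) (j : nat) : R :=
  IZR (Nprime K q n N * qtilde K q j).

(* B(phi,n,N,j) = (1/nu) * sum over l in Z with l q_j in I(n,N) of phi(n + l q_j).
   The sum is indexed by m = l q_j, i.e. over m in I(n,N) divisible by q_j
   (l <-> l q_j is a bijection since q_j <> 0). *)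
Definition Bj (K : nat) (q : nat -> Z) (phi : Z -> R) (n : Z) (N : nat) (j : nat) : R :=
  / nu K q n N j *
  Rsum_list (map (fun m => phi (n + m)%Z)
    (filter (fun m => (m mod q j =? 0)%Z) (Zrange (Ilo K q n N) (Ihi K q n N)))).

Definition Bavg (K : nat) (q : nat -> Z) (phi : Z -> R) (n : Z) (N : nat) : R :=
  Rsum_list (map (fun j => nu K q n N j * Bj K q phi n N j) (seq 0 K))
  / Rsum_list (map (fun j => nu K q n N j) (seq 0 K)).

Definition Bstar (K : nat) (q : nat -> Z) (phi : Z -> R) (n : Z) : Rbar :=
  Lub_Rbar (fun x => exists N : nat, (1 <= N)%nat /\ x = Rabs (Bavg K q phi n N)).

(* Main.v *)
Require Import Defs.
From Stdlib Require Import Reals ZArith List Znumtheory Lia Lra Classical.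
From Coquelicot Require Import Coquelicot.
Import ListNotations.
Open Scope R_scope.

Definition sumf {A} (f : A -> R) (l : list A) : R :=
  fold_right (fun x acc => f x + acc) 0 l.

Lemma sumf_plus {A} (f g : A -> R) l :
  sumf (fun x => f x + g x) l = sumf f l + sumf g l.
Proof. induction l; simpl; [lra|rewrite IHl; lra]. Qed.

Lemma sumf_scal {A} (c : R) (f : A -> R) l :
  sumf (fun x => c * f x) l = c * sumf f l.
Proof. induction l; simpl; [lra|rewrite IHl; lra]. Qed.

Lemma sumf_ext {A} (f g : A -> R) l :
  (forall x, In x l -> f x = g x) -> sumf f l = sumf g l.
Proof. induction l; simpl; intros H; [lra|]. rewrite H, IHl; auto. Qed.

Lemma sumf_le {A} (f g : A -> R) l :
  (forall x, In x l -> f x <= g x) -> sumf f l <= sumf g l.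
Proof. induction l; simpl; intros H; [lra|].
  specialize (IHl (fun x Hx => H x (or_intror Hx))). specialize (H a (or_introl eq_refl)). lra. Qed.

Lemma sumf_nonneg {A} (f : A -> R) l :
  (forall x, In x l -> 0 <= f x) -> 0 <= sumf f l.
Proof. intros H. replace 0 with (sumf (fun _ : A => 0) l).
  apply sumf_le; auto. induction l; simpl; auto; rewrite IHl; auto with *; lra. Qed.

Lemma sumf_abs {A} (f : A -> R) l : Rabs (sumf f l) <= sumf (fun x => Rabs (f x)) l.
Proof. induction l; simpl. rewrite Rabs_R0; lra.
  eapply Rle_trans. apply Rabs_triang. lra. Qed.

Lemma sumf_map {A B} (f : A -> B) (g : B -> R) l : sumf g (map f l) = sumf (fun x => g (f x)) l.
Proof. induction l; simpl; auto. rewrite IHl; auto. Qed.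

Lemma sumf_swap {A B} (f : A -> B -> R) l1 l2 :
  sumf (fun x => sumf (fun y => f x y) l2) l1 = sumf (fun y => sumf (fun x => f x y) l1) l2.
Proof. induction l1; simpl.
  - induction l2; simpl; auto. rewrite <- IHl2; lra.
  - rewrite IHl1. rewrite <- sumf_plus. reflexivity. Qed.

Lemma Rsum_list_map {A} (f : A -> R) l : Rsum_list (map f l) = sumf f l.
Proof. induction l; simpl; auto. rewrite <- IHl; reflexivity. Qed.

Lemma sumf_filter {A} (P : A -> bool) (f : A -> R) l :
  sumf f (filter P l) = sumf (fun x => if P x then f x else 0) l.
Proof. induction l; simpl; auto. destruct (P a); simpl; rewrite IHl; lra. Qed.

Lemma length_sumf {A} (l : list A) : INR (length l) = sumf (fun _ => 1) l.
Proof. induction l; simpl length; simpl sumf. reflexivity. rewrite S_INR, IHl; lra. Qed.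

Lemma sumf_zero {A} (l : list A) : sumf (fun _ => 0) l = 0.
Proof. induction l; simpl; auto. rewrite IHl; lra. Qed.

Lemma sumf_single (S : list Z) (f : Z -> R) y :
  NoDup S -> (~ In y S -> f y = 0) ->
  sumf (fun x => if Z.eq_dec x y then f x else 0) S = f y.
Proof. induction S as [|s S IH]; simpl; intros ND H.
  - symmetry; apply H; auto.
  - inversion ND; subst. destruct (Z.eq_dec s y).
    + subst. assert (Hz : sumf (fun x => if Z.eq_dec x y then f x else 0) S = 0).
      { transitivity (sumf (fun _ : Z => 0) S); [|apply sumf_zero].
        apply sumf_ext. intros x Hx. destruct (Z.eq_dec x y); [subst; tauto|lra]. }
      rewrite Hz. destruct (Z.eq_dec y y); [lra|congruence].
    + rewrite IH; auto. lra. intros Hn; apply H. intros [E|E]; auto. Qed.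

Lemma sumf_transfer (R0 S : list Z) (f : Z -> R) :
  NoDup R0 -> NoDup S -> (forall y, f y <> 0 -> In y S) ->
  sumf f R0 = sumf (fun x => if in_dec Z.eq_dec x R0 then f x else 0) S.
Proof. induction R0 as [|y R0 IH]; intros NR NS Hs.
  - symmetry; transitivity (sumf (fun _ : Z => 0) S); [|apply sumf_zero]. apply sumf_ext; intros; simpl; lra.
  - inversion NR; subst. change (sumf f (y :: R0)) with (f y + sumf f R0). rewrite IH; auto.
    rewrite <- (sumf_single S f y) at 1; auto.
    2:{ intros Hn. destruct (Req_dec (f y) 0); auto. exfalso; auto. }
    rewrite <- sumf_plus. apply sumf_ext. intros x _.
    destruct (in_dec Z.eq_dec x (y :: R0)) as [Hi|Hi];
    destruct (Z.eq_dec x y); destruct (in_dec Z.eq_dec x R0); subst; try lra.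
    all: first [ tauto | (exfalso; apply Hi; simpl; tauto) | (destruct Hi as [Hi|Hi]; subst; tauto)].
Qed.

Lemma Zrange_In a b x : In x (Zrange a b) <-> (a <= x < b)%Z.
Proof. unfold Zrange. rewrite in_map_iff. split.
  - intros [k [E Hk]]. apply in_seq in Hk. lia.
  - intros H. exists (Z.to_nat (x - a)). split. lia. apply in_seq. lia. Qed.

Lemma Zrange_NoDup a b : NoDup (Zrange a b).
Proof. unfold Zrange. apply NoDup_map_NoDup_ForallPairs; [|apply seq_NoDup].
  intros x y _ _ E. lia. Qed.

Lemma Zrange_length a b : length (Zrange a b) = Z.to_nat (b - a).
Proof. unfold Zrange. rewrite length_map, length_seq. reflexivity. Qed.

Lemma nodup_range_le (l : list Z) a b : NoDup l -> (forall x, In x l -> (a <= x < b)%Z) ->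
  INR (length l) <= IZR (Z.max 0 (b - a)).
Proof. intros ND H. assert (Hl : (length l <= length (Zrange a b))%nat).
  { apply NoDup_incl_length; auto. intros x Hx. apply Zrange_In; auto. }
  rewrite Zrange_length in Hl. apply le_INR in Hl. rewrite (INR_IZR_INZ (Z.to_nat _)) in Hl.
  replace (Z.of_nat (Z.to_nat (b - a))) with (Z.max 0 (b - a)) in Hl by lia. exact Hl. Qed.

Lemma NoDup_map_on {A B} (f : A -> B) l : NoDup l ->
  (forall x y, In x l -> In y l -> f x = f y -> x = y) -> NoDup (map f l).
Proof. intros ND H. apply NoDup_map_NoDup_ForallPairs; auto. Qed.

Lemma length_filter_sumf {A} (P : A -> bool) l :
  INR (length (filter P l)) = sumf (fun x => if P x then 1 else 0) l.
Proof. rewrite length_sumf, sumf_filter. reflexivity. Qed.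

Lemma exists_min_key (key : Z -> Z) (l : list Z) : l <> [] ->
  exists n0, In n0 l /\ forall n, In n l -> (key n0 <= key n)%Z.
Proof. induction l as [|x l IH]; intros H; [congruence|].
  destruct l as [|y l'].
  - exists x; split; [left; auto|]. intros n [E|[]]; subst; lia.
  - destruct IH as [m [Hm Hmin]]; [congruence|].
    destruct (Z_le_gt_dec (key x) (key m)).
    + exists x. split; [left; auto|]. intros n [E|E]; subst; [lia|]. specialize (Hmin n E); lia.
    + exists m. split; [right; auto|]. intros n [E|E]; subst; [lia|]. auto. Qed.

Lemma oneside (p rho : Z) (w : Z -> R) (S : list Z) (lam : R) :
  (0 < p)%Z -> 0 < lam -> (forall x, 0 <= w x) ->
  forall k (E : list Z), (length E <= k)%nat -> NoDup E ->
  (forall n, In n E -> n mod p = rho)%Z ->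
  (forall n, In n E -> exists b, (n / p < b)%Z /\
     lam * IZR (b - n / p) < sumf (fun x => if andb (n / p <=? x / p)%Z (x / p <? b)%Z then w x else 0) S) ->
  forall c, (forall n, In n E -> c <= n / p)%Z ->
  lam * INR (length E) <= sumf (fun x => if (c <=? x / p)%Z then w x else 0) S.
Proof.
  intros Hp Hl Hw k. induction k as [|k IH]; intros E Hk ND Hr Hb c Hc.
  - destruct E; simpl in Hk; [|lia]. simpl. rewrite Rmult_0_r.
    apply sumf_nonneg. intros x _. destruct (c <=? x / p)%Z; auto; lra.
  - destruct E as [|e E'].
    + simpl. rewrite Rmult_0_r. apply sumf_nonneg. intros x _. destruct (c <=? x / p)%Z; auto; lra.
    + set (E := e :: E') in *.
      destruct (exists_min_key (fun n => n / p)%Z E) as [n0 [Hn0 Hmin]]; [discriminate|].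
      destruct (Hb n0 Hn0) as [b0 [Hab Hsum]].
      set (E1 := filter (fun n => (n / p <? b0)%Z) E).
      set (E2 := filter (fun n => negb (n / p <? b0)%Z) E).
      assert (Hlen : (length E1 + length E2 = length E)%nat) by apply filter_length.
      assert (Hn0E1 : In n0 E1). { apply filter_In. split; auto. apply Z.ltb_lt; lia. }
      assert (HE1pos : (1 <= length E1)%nat). { destruct E1; [destruct Hn0E1|simpl; lia]. }
      assert (HE2 : lam * INR (length E2) <=
                    sumf (fun x => if (b0 <=? x / p)%Z then w x else 0) S).
      { apply IH.
        - lia.
        - apply NoDup_filter; auto.
        - intros n Hn. apply filter_In in Hn. apply Hr, Hn.
        - intros n Hn. apply filter_In in Hn. apply Hb, Hn.
        - intros n Hn. apply filter_In in Hn. destruct Hn as [_ Hn].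
          apply Bool.negb_true_iff, Z.ltb_ge in Hn. lia. }
      assert (HE1 : INR (length E1) <= IZR (b0 - n0 / p)).
      { assert (Hm : INR (length (map (fun n => n / p)%Z E1)) <= IZR (Z.max 0 (b0 - n0 / p))).
        { apply nodup_range_le.
          - apply NoDup_map_on. apply NoDup_filter; auto.
            intros x y Hx Hy Exy. apply filter_In in Hx; apply filter_In in Hy.
            destruct Hx as [Hx _]; destruct Hy as [Hy _].
            rewrite (Z.div_mod x p), (Z.div_mod y p) by lia. rewrite Hr, Hr, Exy; auto.
          - intros z Hz. apply in_map_iff in Hz. destruct Hz as [x [<- Hx]].
            apply filter_In in Hx. destruct Hx as [Hx Hx2]. apply Z.ltb_lt in Hx2.
            specialize (Hmin x Hx). lia. }
        rewrite length_map in Hm. rewrite Z.max_r in Hm by lia. exact Hm. }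
      assert (Hsplit : sumf (fun x => if andb (n0 / p <=? x / p)%Z (x / p <? b0)%Z then w x else 0) S
                       + sumf (fun x => if (b0 <=? x / p)%Z then w x else 0) S
                       <= sumf (fun x => if (c <=? x / p)%Z then w x else 0) S).
      { rewrite <- sumf_plus. apply sumf_le. intros x _. specialize (Hc n0 Hn0). specialize (Hw x).
        destruct (n0 / p <=? x / p)%Z eqn:E1'; destruct (x / p <? b0)%Z eqn:E2';
        destruct (b0 <=? x / p)%Z eqn:E3'; destruct (c <=? x / p)%Z eqn:E4'; simpl;
        rewrite ?Z.leb_le, ?Z.leb_gt, ?Z.ltb_lt, ?Z.ltb_ge in *; try lra; lia. }
      rewrite <- Hlen, plus_INR. nra.
Qed.

Lemma prod_pos (q : nat -> Z) l : (forall j, In j l -> 0 < q j)%Z -> (0 < fold_right Z.mul 1 (map q l))%Z.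
Proof. induction l; simpl; intros H. lia. apply Z.mul_pos_pos; auto. Qed.

Lemma prod_div (q : nat -> Z) l j : In j l -> (q j | fold_right Z.mul 1 (map q l))%Z.
Proof. induction l; simpl; intros H; [destruct H|]. destruct H as [E|E]. subst. apply Z.divide_factor_l.
  apply Z.divide_mul_r; auto. Qed.

Lemma div_range p a b x : (0 < p)%Z -> ((a * p <= x < b * p) <-> (a <= x / p < b))%Z.
Proof. intros Hp. pose proof (Z.div_mod x p). pose proof (Z.mod_pos_bound x p Hp). split; nia. Qed.

Lemma mod_shift x rho q : (q <> 0)%Z -> ((x - rho) mod q = 0)%Z -> (rho mod q = x mod q)%Z.
Proof. intros Hq H. apply Z.mod_divide in H; auto. destruct H as [t Ht].
  replace rho with (x + (- t) * q)%Z by lia. apply Z.mod_add; auto. Qed.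

Lemma count_res (x p q : Z) : (0 < q)%Z -> (0 < p)%Z -> (q | p)%Z ->
  sumf (fun rho => if ((x - rho) mod q =? 0)%Z then 1 else 0) (Zrange 0 p) <= IZR (p / q).
Proof. intros Hq Hp Hd.
  assert (Hpe : p = (q * (p / q))%Z). { apply Z_div_exact_full_2; [lia|]. apply Z.mod_divide; auto; lia. }
  rewrite <- length_filter_sumf.
  set (F := filter _ _).
  assert (Hm : INR (length (map (fun r => r / q)%Z F)) <= IZR (Z.max 0 (p / q - 0))).
  { apply nodup_range_le.
    - apply NoDup_map_on. apply NoDup_filter, Zrange_NoDup.
      intros r1 r2 H1 H2 E. apply filter_In in H1; apply filter_In in H2.
      destruct H1 as [_ H1]; destruct H2 as [_ H2]. apply Z.eqb_eq in H1; apply Z.eqb_eq in H2.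
      apply mod_shift in H1; [|lia]. apply mod_shift in H2; [|lia].
      rewrite (Z.div_mod r1 q), (Z.div_mod r2 q) by lia. rewrite H1, H2, E. reflexivity.
    - intros z Hz. apply in_map_iff in Hz. destruct Hz as [r [<- Hr]].
      apply filter_In in Hr. destruct Hr as [Hr _]. apply Zrange_In in Hr. split.
      + apply Z.div_pos; lia.
      + apply Z.div_lt_upper_bound; lia. }
  rewrite length_map in Hm. eapply Rle_trans; [exact Hm|]. apply IZR_le.
  assert (0 <= p / q)%Z by (apply Z.div_pos; lia). lia. Qed.

Definition PR (K : nat) (q : nat -> Z) : R := sumf (fun j => IZR (qtilde K q j)) (seq 0 K).
Definition cnt (K : nat) (q : nat -> Z) (x rho : Z) : R :=
  sumf (fun j => if ((x - rho) mod q j =? 0)%Z then 1 else 0) (seq 0 K).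
Definition wt (K : nat) (q : nat -> Z) (phi : Z -> R) (rho x : Z) : R :=
  Rabs (phi x) * cnt K q x rho / PR K q.

Lemma step1 (K : nat) (q : nat -> Z) (phi : Z -> R) (S : list Z) (lam : R) n N :
  (1 <= K)%nat -> (forall j, (j < K)%nat -> 0 < q j)%Z -> NoDup S ->
  (forall n, phi n <> 0 -> In n S) ->
  lam < Rabs (Bavg K q phi n N) ->
  let p := pprod K q in
  exists b, (n / p < b)%Z /\
     lam * IZR (b - n / p) < sumf (fun x => if andb (n / p <=? x / p)%Z (x / p <? b)%Z
                                             then wt K q phi (n mod p)%Z x else 0) S.
Proof.
  intros HK Hq NS Hsupp Hlam p.
  assert (Hp : (0 < p)%Z). { apply prod_pos. intros j Hj. apply in_seq in Hj. apply Hq; lia. }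
  assert (Hqt : forall j, (j < K)%nat -> p = (q j * qtilde K q j)%Z /\ (0 < qtilde K q j)%Z).
  { intros j Hj. assert (Hd : (q j | p)%Z) by (apply prod_div, in_seq; lia).
    specialize (Hq j Hj).
    assert (E : p = (q j * (p / q j))%Z). { apply Z_div_exact_full_2; [lia|]. apply Z.mod_divide; auto; lia. }
    unfold qtilde. fold p. split; auto. nia. }
  assert (HPR : 0 < PR K q).
  { unfold PR. destruct K as [|K']; [lia|]. simpl seq.
    change (sumf ?f (0%nat :: ?l)) with (f 0%nat + sumf f l).
    assert (0 < IZR (qtilde (Datatypes.S K') q 0)) by (apply IZR_lt; apply Hqt; lia).
    assert (0 <= sumf (fun j => IZR (qtilde (Datatypes.S K') q j)) (seq 1 K')).
    { apply sumf_nonneg. intros j Hj. apply in_seq in Hj. apply IZR_le. 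
      assert (0 < qtilde (Datatypes.S K') q j)%Z by (apply Hqt; lia). lia. }
    lra. }
  set (a := (n / p)%Z). set (b := ((n + Z.of_nat N) / p + 1)%Z).
  assert (Hab : (a < b)%Z). { unfold a, b. assert (n / p <= (n + Z.of_nat N) / p)%Z by (apply Z.div_le_mono; lia). lia. }
  exists b. split; [exact Hab|].
  set (R0 := Zrange (a * p - n) (b * p - n)).
  set (T := fun j => sumf (fun m => if (m mod q j =? 0)%Z then Rabs (phi (n + m)%Z) else 0) R0).
  assert (HB : Rabs (Bavg K q phi n N) <= sumf T (seq 0 K) / (IZR (b - a) * PR K q)).
  { assert (HIlo : Ilo K q n N = (a * p - n)%Z) by (unfold Ilo, t0; fold p; fold a; ring).
    assert (HIhi : Ihi K q n N = (b * p - n)%Z) by (unfold Ihi, t1; fold p; fold b; ring).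
    assert (HNp : Nprime K q n N = (b - a)%Z) by (unfold Nprime, t1, t0; fold p; fold a b; ring).
    assert (Hnu : forall j, nu K q n N j = IZR (b - a) * IZR (qtilde K q j))
      by (intros j; unfold nu; rewrite HNp, mult_IZR; reflexivity).
    unfold Bavg. rewrite !Rsum_list_map.
    assert (Hden : sumf (fun j => nu K q n N j) (seq 0 K) = IZR (b - a) * PR K q).
    { unfold PR. rewrite <- sumf_scal. apply sumf_ext. intros; apply Hnu. }
    rewrite Hden.
    assert (Hpos : 0 < IZR (b - a) * PR K q).
    { apply Rmult_lt_0_compat; auto. apply IZR_lt; lia. }
    unfold Rdiv. rewrite Rabs_mult, (Rabs_right (/ _)) by (left; apply Rinv_0_lt_compat; auto).
    apply Rmult_le_compat_r; [left; apply Rinv_0_lt_compat; auto|].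
    eapply Rle_trans; [apply sumf_abs|]. apply sumf_le. intros j Hj. apply in_seq in Hj.
    destruct (Hqt j ltac:(lia)) as [_ Hqtj].
    unfold Bj. rewrite HIlo, HIhi. fold R0. rewrite Hnu. rewrite Rsum_list_map, sumf_filter.
    rewrite <- Rmult_assoc, Rinv_r, Rmult_1_l.
    2:{ apply Rmult_integral_contrapositive; split; apply not_0_IZR; lia. }
    eapply Rle_trans; [apply sumf_abs|]. unfold T. apply sumf_le. intros m _.
    destruct (m mod q j =? 0)%Z; [lra|rewrite Rabs_R0; lra]. }
  set (rho := (n mod p)%Z).
  assert (Hn : n = (p * a + rho)%Z) by (apply Z.div_mod; lia).
  assert (HT : forall j, (j < K)%nat -> T j = sumf (fun x => if andb (a <=? x / p)%Z (x / p <? b)%Z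
            then (if ((x - rho) mod q j =? 0)%Z then Rabs (phi x) else 0) else 0) S).
  { intros j Hj. destruct (Hqt j Hj) as [Hpq Hqtj]. specialize (Hq j Hj).
    unfold T. rewrite (sumf_transfer R0 (map (fun x => (x - n)%Z) S)).
    - rewrite sumf_map. apply sumf_ext. intros x _.
      assert (Hmod : ((x - n) mod q j = (x - rho) mod q j)%Z).
      { replace (x - n)%Z with ((x - rho) + (- (qtilde K q j * a)) * q j)%Z by (rewrite Hn, Hpq; ring).
        apply Z.mod_add; lia. }
      replace (n + (x - n))%Z with x by ring. rewrite Hmod.
      destruct (in_dec Z.eq_dec (x - n)%Z R0) as [Hi|Hi]; unfold R0 in Hi; rewrite Zrange_In in Hi;
      destruct (a <=? x / p)%Z eqn:E1; destruct (x / p <? b)%Z eqn:E2; simpl; auto;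
      rewrite ?Z.leb_le, ?Z.leb_gt, ?Z.ltb_lt, ?Z.ltb_ge in *;
      try (exfalso; pose proof (div_range p a b x Hp); lia).
    - apply Zrange_NoDup.
    - apply NoDup_map_on; auto. intros; lia.
    - intros y Hy. destruct (Z.eq_dec (y mod q j) 0) as [E|E].
      + rewrite (proj2 (Z.eqb_eq _ _) E) in Hy. apply in_map_iff. exists (n + y)%Z. split; [ring|].
        apply Hsupp. intros H0. apply Hy. rewrite H0, Rabs_R0; reflexivity.
      + rewrite (proj2 (Z.eqb_neq _ _) E) in Hy. lra. }
  assert (HsumT : sumf T (seq 0 K) = sumf (fun x => if andb (a <=? x / p)%Z (x / p <? b)%Z
            then Rabs (phi x) * cnt K q x rho else 0) S).
  { rewrite (sumf_ext T (fun j => sumf (fun x => if andb (a <=? x / p)%Z (x / p <? b)%Z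
            then (if ((x - rho) mod q j =? 0)%Z then Rabs (phi x) else 0) else 0) S)).
    2:{ intros j Hj. apply in_seq in Hj. apply HT. lia. }
    rewrite sumf_swap. apply sumf_ext. intros x _.
    destruct (andb (a <=? x / p)%Z (x / p <? b)%Z).
    - unfold cnt. rewrite <- sumf_scal. apply sumf_ext. intros j _.
      destruct ((x - rho) mod q j =? 0)%Z; lra.
    - apply sumf_zero. }
  rewrite HsumT in HB.
  set (X := sumf (fun x => if andb (a <=? x / p)%Z (x / p <? b)%Z
            then Rabs (phi x) * cnt K q x rho else 0) S) in *.
  assert (HX : sumf (fun x => if andb (a <=? x / p)%Z (x / p <? b)%Z then wt K q phi rho x else 0) S
               = X / PR K q).
  { unfold X, Rdiv. rewrite Rmult_comm, <- sumf_scal. apply sumf_ext. intros x _. unfold wt.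
    destruct (andb (a <=? x / p)%Z (x / p <? b)%Z); unfold Rdiv; ring. }
  rewrite HX.
  assert (HD : 0 < IZR (b - a)) by (apply IZR_lt; lia).
  assert (Hlt : lam < X / (IZR (b - a) * PR K q)) by lra.
  replace (X / PR K q) with ((X / (IZR (b - a) * PR K q)) * IZR (b - a)) by (field; lra).
  apply Rmult_lt_compat_r; auto.
Qed.

Lemma Bstar_ex K q phi n lam : Rbar_lt (Finite lam) (Bstar K q phi n) ->
  exists N : nat, lam < Rabs (Bavg K q phi n N).
Proof. intros H. apply NNPP. intros Hn. unfold Bstar in H.
  destruct (Lub_Rbar_correct (fun x => exists N : nat, (1 <= N)%nat /\ x = Rabs (Bavg K q phi n N))) as [Hub Hlub].
  assert (Hl : Rbar_le (Lub_Rbar (fun x => exists N : nat, (1 <= N)%nat /\ x = Rabs (Bavg K q phi n N))) lam).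
  { apply Hlub. intros x [N [_ ->]]. simpl. apply Rnot_lt_le. intros Hc. apply Hn. exists N; auto. }
  eapply Rbar_lt_not_le; eauto. Qed.

Theorem lemma4p4 (K : nat) (q : nat -> Z) (phi : Z -> R) (S : list Z) (lam : R) :
  (1 <= K)%nat ->
  (forall j, (j < K)%nat -> prime (q j)) ->
  (forall i j, (i < K)%nat -> (j < K)%nat -> i <> j -> q i <> q j) ->
  (forall i j, (i < K)%nat -> (j < K)%nat ->
     / 2 < IZR (q i) / IZR (q j) /\ IZR (q i) / IZR (q j) < 2) ->
  NoDup S ->
  (forall n, phi n <> 0 -> In n S) ->
  0 < lam ->
  forall L : list Z, NoDup L ->
    (forall n, In n L -> Rbar_lt (Finite lam) (Bstar K q phi n)) ->
    INR (length L) <= 4 / lam * Rsum_list (map (fun n => Rabs (phi n)) S).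
Proof.
  intros HK Hprime _ _ NS Hsupp Hlam L NL HL.
  assert (Hq : forall j, (j < K)%nat -> (0 < q j)%Z).
  { intros j Hj. pose proof (prime_ge_2 _ (Hprime j Hj)). lia. }
  set (p := pprod K q).
  assert (Hp : (0 < p)%Z). { apply prod_pos. intros j Hj. apply in_seq in Hj. apply Hq; lia. }
  assert (HPR : 0 < PR K q).
  { unfold PR. destruct K as [|K']; [lia|]. simpl seq.
    change (sumf ?f (0%nat :: ?l)) with (f 0%nat + sumf f l).
    assert (H0 : forall j, (j < Datatypes.S K')%nat -> (0 < qtilde (Datatypes.S K') q j)%Z).
    { intros j Hj. specialize (Hq j Hj). assert (Hd : (q j | p)%Z) by (apply prod_div, in_seq; lia).
      assert (E : p = (q j * (p / q j))%Z). { apply Z_div_exact_full_2; [lia|]. apply Z.mod_divide; auto; lia. }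
      unfold qtilde. fold p. nia. }
    assert (0 < IZR (qtilde (Datatypes.S K') q 0)) by (apply IZR_lt; apply H0; lia).
    assert (0 <= sumf (fun j => IZR (qtilde (Datatypes.S K') q j)) (seq 1 K')).
    { apply sumf_nonneg. intros j Hj. apply in_seq in Hj. apply IZR_le. 
      assert (0 < qtilde (Datatypes.S K') q j)%Z by (apply H0; lia). lia. }
    lra. }
  set (M := Rsum_list (map (fun n => Rabs (phi n)) S)).
  assert (HM : M = sumf (fun x => Rabs (phi x)) S) by (apply Rsum_list_map).
  assert (Hc : exists c, forall n, In n L -> (c <= n / p)%Z).
  { destruct L as [|l0 L']. exists 0%Z; intros n [].
    destruct (exists_min_key (fun n => n / p)%Z (l0 :: L')) as [m [_ Hm]]; [discriminate|].
    exists (m / p)%Z. auto. }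
  destruct Hc as [c Hc].
  assert (Hw : forall rho x, 0 <= wt K q phi rho x).
  { intros rho x. unfold wt, Rdiv. apply Rmult_le_pos; [|left; apply Rinv_0_lt_compat; auto].
    apply Rmult_le_pos; [apply Rabs_pos|]. unfold cnt. apply sumf_nonneg. intros j _.
    destruct (_ =? _)%Z; lra. }
  assert (Hres : forall rho, lam * INR (length (filter (fun n => (n mod p =? rho)%Z) L))
                             <= sumf (wt K q phi rho) S).
  { intros rho. eapply Rle_trans.
    - apply (oneside p rho (wt K q phi rho) S lam Hp Hlam (Hw rho)
               (length (filter (fun n => (n mod p =? rho)%Z) L))); auto.
      + apply NoDup_filter; auto.
      + intros n Hn. apply filter_In in Hn. apply Z.eqb_eq, Hn.
      + intros n Hn. apply filter_In in Hn. destruct Hn as [Hn Hr]. apply Z.eqb_eq in Hr.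
        destruct (Bstar_ex _ _ _ _ _ (HL n Hn)) as [N HN].
        destruct (step1 K q phi S lam n N HK Hq NS Hsupp HN) as [b [Hb1 Hb2]].
        fold p in Hb1, Hb2. rewrite Hr in Hb2. exists b; auto.
      + intros n Hn. apply filter_In in Hn. apply Hc, Hn.
    - apply sumf_le. intros x _. destruct (c <=? x / p)%Z; auto. lra. }
  assert (HLs : INR (length L) = sumf (fun rho => INR (length (filter (fun n => (n mod p =? rho)%Z) L))) (Zrange 0 p)).
  { rewrite length_sumf.
    rewrite (sumf_ext (fun _ => 1) (fun n => sumf (fun rho => if (n mod p =? rho)%Z then 1 else 0) (Zrange 0 p))).
    - rewrite sumf_swap. apply sumf_ext. intros rho _. rewrite length_filter_sumf. reflexivity.
    - intros n _.
      transitivity (sumf (fun x => if Z.eq_dec x (n mod p) then 1 else 0) (Zrange 0 p)).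
      + symmetry. apply (sumf_single (Zrange 0 p) (fun _ => 1) (n mod p)).
        * apply Zrange_NoDup.
        * intros Hn. exfalso. apply Hn, Zrange_In. apply Z.mod_pos_bound; lia.
      + apply sumf_ext. intros rho _. destruct (Z.eq_dec rho (n mod p)) as [E|E].
        * subst. rewrite Z.eqb_refl. reflexivity.
        * destruct (Z.eqb_spec (n mod p) rho); [congruence|reflexivity]. }
  assert (Hmain : lam * INR (length L) <= M).
  { rewrite HLs, <- sumf_scal.
    eapply Rle_trans. { apply sumf_le. intros rho _. apply Hres. }
    rewrite sumf_swap. rewrite HM. apply sumf_le. intros x _.
    unfold wt. unfold Rdiv.
    rewrite (sumf_ext _ (fun rho => (Rabs (phi x) * / PR K q) * cnt K q x rho)) by (intros; ring).
    rewrite sumf_scal.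
    assert (Hcnt : sumf (fun rho => cnt K q x rho) (Zrange 0 p) <= PR K q).
    { unfold cnt, PR. rewrite sumf_swap. apply sumf_le. intros j Hj. apply in_seq in Hj.
      apply count_res; auto. apply Hq; lia. apply prod_div, in_seq; lia. }
    pose proof (Rabs_pos (phi x)).
    replace (Rabs (phi x)) with (Rabs (phi x) * / PR K q * PR K q) at 2 by (field; lra).
    apply Rmult_le_compat_l; auto. apply Rmult_le_pos; auto. left; apply Rinv_0_lt_compat; auto. }
  assert (HM0 : 0 <= M). { rewrite HM. apply sumf_nonneg. intros; apply Rabs_pos. }
  fold M.
  apply (Rmult_le_reg_l lam); auto.
  replace (lam * (4 / lam * M)) with (4 * M) by (field; lra). lra.
Qed.
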